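(* Let $(X_1,\dots,X_d)$ be a non-degenerate $d$-dimensional $1$-Meixner random vector with $E[X_k]=0$ and $E[X_iX_j]=\delta_{i,j}$ for all $i,j,k$, and let $\alpha_{i,j,k}$ be the real numbers with $[U_i,X_j]=\sum_{k}\alpha_{i,j,k}X_k+\beta_{i,j}I$. Then for all $(i,j,k)\in\{1,\dots,d\}^3$: (1) $\alpha_{i,j,k}=\alpha_{j,i,k}$; (2) $\alpha_{i,j,k}=\alpha_{i,k,j}$; (3) for every permutation $\pi$ of $(i,j,k)$, $\alpha_{\pi(i),\pi(j),\pi(k)}=\alpha_{i,j,k}$.
   Context: Let $X_1,\dots,X_d$ be real random variables on $(\Omega,\mathcal F,P)$ with finite moments of all orders. $F$ is the space of polynomial random variables $f(X_1,\dots,X_d)$ (complex coefficients), $F_n$ those of degree $\le n$, $G_0=F_0$, $G_n=F_n\ominus F_{n-1}$ in $L^2(P)$. For $f\in G_n$, $X_if\in G_{n-1}\oplus G_n\oplus G_{n+1}$; its components define $a^-(i)f,a^0(i)f,a^+(i)f$ respectively, extended linearly to $F$. $U_i:=a^-(i)+\tfrac12a^0(i)$ (semi-annihilation operator). $(X_1,\dots,X_d)$ is a $d$-dimensional $1$-Meixner random vector if there are reals $\alpha_{i,j,k},\beta_{i,j}$ with $[U_i,X_j]=\sum_k\alpha_{i,j,k}X_k+\beta_{i,j}I$ on $F$ for all $i,j$ (with $X_j$ the multiplication operator, $I$ the identity); it is non-degenerate if $I,X_1,\dots,X_d$ are linearly independent operators on $F$. *)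

(* Defs.v *)
From mathcomp Require Import all_boot all_order all_algebra all_fingroup.
From mathcomp Require Import all_classical all_reals all_analysis.
From mathcomp Require Import complex.
Set Implicit Arguments. Unset Strict Implicit. Unset Printing Implicit Defensive.
Import Order.TTheory GRing.Theory Num.Theory.
Local Open Scope ring_scope.
Local Open Scope complex_scope.

Section Meixner.
Variables (R : realType) (dm : measure_display) (T : measurableType dm)
  (P : probability T R) (d : nat) (X : 'I_d -> T -> R).

Definition cre (z : R[i]) : R := let: a +i* _ := z in a.
Definition cim (z : R[i]) : R := let: _ +i* b := z in b.

Definition cexpect (f : T -> R[i]) : R[i] :=
  (fine (expectation P (fun w => cre (f w)))) +i*
  (fine (expectation P (fun w => cim (f w)))).

Definition l2inner (f g : T -> R[i]) : R[i] := cexpect (fun w => f w * conjc (g w)).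

Definition eqL2 (f g : T -> R[i]) : Prop :=
  l2inner (fun w => f w - g w) (fun w => f w - g w) = 0.

Definition mdeg (m : {ffun 'I_d -> nat}) : nat := (\sum_(i < d) m i)%N.
Definition monoRV (m : {ffun 'I_d -> nat}) : T -> R[i] :=
  fun w => \prod_(i < d) ((X i w) ^+ (m i))%:C.

Definition polyRV_lt (n : nat) (f : T -> R[i]) : Prop :=
  exists s : seq ({ffun 'I_d -> nat} * R[i]),
    all (fun mc => mdeg mc.1 < n)%N s /\
    f = (fun w => \sum_(mc <- s) mc.2 * monoRV mc.1 w).

Definition inFn (n : nat) (f : T -> R[i]) : Prop := polyRV_lt n.+1 f.
Definition inF (f : T -> R[i]) : Prop := exists n, inFn n f.

(* G_n = F_n (-) F_{n-1}  (G_0 = F_0) *)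
Definition inG (n : nat) (f : T -> R[i]) : Prop :=
  inFn n f /\ forall g, polyRV_lt n g -> l2inner f g = 0.

Definition is_Gcomp (n : nat) (g h : T -> R[i]) : Prop :=
  inG n h /\ forall k, inG n k -> l2inner (fun w => g w - h w) k = 0.

Definition Gcomp (n : nat) (g : T -> R[i]) : T -> R[i] :=
  match pselect (exists h, is_Gcomp n g h) with
  | left e => proj1_sig (cid e)
  | right _ => fun _ => 0
  end.

Definition mulX (i : 'I_d) (f : T -> R[i]) : T -> R[i] :=
  fun w => (X i w)%:C * f w.

Definition aminus_n (i : 'I_d) (n : nat) (f : T -> R[i]) : T -> R[i] :=
  if n is n'.+1 then Gcomp n' (mulX i f) else (fun _ => 0).
Definition azero_n (i : 'I_d) (n : nat) (f : T -> R[i]) : T -> R[i] :=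
  Gcomp n (mulX i f).

(* U_i = a^-(i) + 1/2 a^0(i), extended linearly:
   for g in F_N, U_i g = sum_{n <= N} (a^-(i) + 1/2 a^0(i)) (G_n-component of g) *)
Definition Uop (i : 'I_d) (N : nat) (g : T -> R[i]) : T -> R[i] :=
  fun w => \sum_(n < N.+1)
    (aminus_n i n (Gcomp n g) w + (2%:R)^-1 * azero_n i n (Gcomp n g) w).

Definition meixner_comm (alpha : 'I_d -> 'I_d -> 'I_d -> R)
  (beta : 'I_d -> 'I_d -> R) : Prop :=
  forall (i j : 'I_d) (N : nat) (g : T -> R[i]), inFn N g ->
    eqL2 (fun w => Uop i N.+1 (mulX j g) w - (X j w)%:C * Uop i N g w)
         (fun w => \sum_(k < d) (alpha i j k)%:C * (X k w)%:C * g w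
                   + (beta i j)%:C * g w).

Definition meixner_nondegenerate : Prop :=
  forall (c0 : R[i]) (c : 'I_d -> R[i]),
    (forall g, inF g ->
       eqL2 (fun w => c0 * g w + \sum_(k < d) c k * (X k w)%:C * g w)
            (fun _ => 0)) ->
    c0 = 0 /\ forall k, c k = 0.

End Meixner.

Definition trip (d : nat) (i j k : 'I_d) : 'I_3 -> 'I_d :=
  fun p => tnth [tuple i; j; k] p.

(* Main.v *)
Require Import Defs.
From mathcomp Require Import all_boot all_order all_algebra all_fingroup.
From mathcomp Require Import all_classical all_reals all_analysis.
From mathcomp Require Import complex.
From mathcomp Require Import ring lra.
From mathcomp Require Import measurable_realfun.
Import Order.TTheory GRing.Theory Num.Theory.
Local Open Scope ring_scope.
Local Open Scope complex_scope.
Set Implicit Arguments. Unset Strict Implicit.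
Section S.
Variables (R : realType) (dm : measure_display) (T : measurableType dm)
  (P : probability T R).
Definition Ef (x : T -> R) : R := fine ('E_P[x])%E.
Local Notation L1 := (Lfun P 1).
Lemma Ef_ext x y : (forall w, x w = y w) -> Ef x = Ef y.
Proof. by move=> h; congr Ef; apply/funext. Qed.
Lemma EfD x y : x \in L1 -> y \in L1 -> Ef (fun w => x w + y w) = Ef x + Ef y.
Proof.
move=> hx hy; rewrite /Ef expectationD// fineD//; exact: expectation_fin_num.
Qed.
Lemma EfZ k x : x \in L1 -> Ef (fun w => k * x w) = k * Ef x.
Proof.
move=> hx; rewrite /Ef.
have -> : (fun w => k * x w) = k \o* x by apply/funext => w /=; rewrite mulrC.
rewrite expectationZl// fineM//; exact: expectation_fin_num.
Qed.
Lemma EfZr k x : x \in L1 -> Ef (fun w => x w * k) = Ef x * k.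
Proof. by move=> hx; rewrite mulrC -EfZ//; apply: Ef_ext => w; rewrite mulrC. Qed.
Lemma Ef_cst k : Ef (fun _ => k) = k.
Proof. by rewrite /Ef (_ : (fun _ => k) = cst k)// expectation_cst. Qed.
Lemma L1_cst k : (fun _ : T => k) \in L1.
Proof. exact: (Lfun_cst P k 1). Qed.
Lemma L1D x y : x \in L1 -> y \in L1 -> (fun w => x w + y w) \in L1.
Proof. by move=> hx hy; apply: (rpredD hx hy). Qed.
Lemma L1Z k x : x \in L1 -> (fun w => k * x w) \in L1.
Proof. by move=> hx; apply: (rpredZ k hx). Qed.
Lemma L1Zr k x : x \in L1 -> (fun w => x w * k) \in L1.
Proof.
move=> hx; rewrite (_ : (fun w => x w * k) = (fun w => k * x w)); first exact: L1Z.
by apply/funext => w; rewrite mulrC.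
Qed.
Lemma L1_ext x y : (forall w, x w = y w) -> x \in L1 -> y \in L1.
Proof. by move=> h; rewrite (_ : x = y)//; apply/funext. Qed.
Lemma L1_sum (I : Type) (s : seq I) (F : I -> T -> R) :
  (forall i, F i \in L1) -> (fun w => \sum_(i <- s) F i w) \in L1.
Proof.
move=> hF; elim: s => [|a s IH].
  by apply: (L1_ext _ (L1_cst 0)) => w; rewrite big_nil.
by apply: (L1_ext _ (L1D (hF a) IH)) => w; rewrite big_cons.
Qed.
Lemma Ef_sum (I : Type) (s : seq I) (F : I -> T -> R) :
  (forall i, F i \in L1) -> Ef (fun w => \sum_(i <- s) F i w) = \sum_(i <- s) Ef (F i).
Proof.
move=> hF; elim: s => [|a s IH].
  by rewrite big_nil (Ef_ext (y := fun _ => 0)) ?Ef_cst // => w; rewrite big_nil.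
rewrite big_cons -IH -EfD//; last exact: L1_sum.
by apply: Ef_ext => w; rewrite big_cons.
Qed.

Lemma cexpectE f : cexpect P f = (Ef (fun w => cre (f w))) +i* (Ef (fun w => cim (f w))).
Proof.
rewrite /cexpect /Ef; congr Complex; congr fine; congr expectation;
  by apply/funext => w; case: (f w).
Qed.
Definition good (f : T -> R[i]) :=
  (fun w => cre (f w)) \in L1 /\ (fun w => cim (f w)) \in L1.
Lemma creD (a b : R[i]) : cre (a + b) = cre a + cre b. Proof. by case: a; case: b. Qed.
Lemma cimD (a b : R[i]) : cim (a + b) = cim a + cim b. Proof. by case: a; case: b. Qed.
Lemma addC_def (a b c e : R) : (a +i* b) + (c +i* e) = (a + c) +i* (b + e).
Proof. by []. Qed.
Lemma goodD f g : good f -> good g -> good (fun w => f w + g w).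
Proof.
move=> [f1 f2] [g1 g2]; split.
  by apply: (L1_ext _ (L1D f1 g1)) => w; rewrite creD.
by apply: (L1_ext _ (L1D f2 g2)) => w; rewrite cimD.
Qed.
Lemma cexpectD f g : good f -> good g ->
  cexpect P (fun w => f w + g w) = cexpect P f + cexpect P g.
Proof.
move=> [f1 f2] [g1 g2]; rewrite !cexpectE addC_def -!EfD//.
by congr Complex; apply: Ef_ext => w; rewrite ?creD ?cimD.
Qed.
Lemma good0 : good (fun _ => 0).
Proof. by split; apply: (L1_ext _ (L1_cst 0)). Qed.
Lemma cexpect0 : cexpect P (fun _ => 0) = 0.
Proof. by rewrite cexpectE /= Ef_cst. Qed.
Lemma good_sum (I : Type) (s : seq I) (F : I -> T -> R[i]) :
  (forall i, good (F i)) -> good (fun w => \sum_(i <- s) F i w).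
Proof.
move=> hF; elim: s => [|a s IH].
  have [h1 h2] := good0.
  by split; [apply: (L1_ext _ h1) | apply: (L1_ext _ h2)] => w; rewrite big_nil.
have [h1 h2] := goodD (hF a) IH.
by split; [apply: (L1_ext _ h1) | apply: (L1_ext _ h2)] => w; rewrite big_cons.
Qed.
Lemma cexpect_ext f g : (forall w, f w = g w) -> cexpect P f = cexpect P g.
Proof. by move=> h; congr cexpect; apply/funext. Qed.
Lemma cexpect_sum (I : Type) (s : seq I) (F : I -> T -> R[i]) :
  (forall i, good (F i)) ->
  cexpect P (fun w => \sum_(i <- s) F i w) = \sum_(i <- s) cexpect P (F i).
Proof.
move=> hF; elim: s => [|a s IH].
  by rewrite big_nil (cexpect_ext (g := fun _ => 0)) ?cexpect0 // => w; rewrite big_nil.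
rewrite big_cons -IH -cexpectD//; last exact: good_sum.
by apply: cexpect_ext => w; rewrite big_cons.
Qed.
Lemma good_rC x c : x \in L1 -> good (fun w => (x w)%:C * c).
Proof.
case: c => a b hx; split.
  by apply: (L1_ext _ (L1Zr (a) hx)) => w /=; rewrite mul0r subr0.
by apply: (L1_ext _ (L1Zr (b) hx)) => w /=; rewrite mul0r addr0.
Qed.
Lemma mulRC (r a b : R) : r%:C * (a +i* b) = (r * a) +i* (r * b).
Proof. by apply/eqP; rewrite eq_complex /=; apply/andP; split; apply/eqP; ring. Qed.
Lemma cexpect_rC x c : x \in L1 -> cexpect P (fun w => (x w)%:C * c) = (Ef x)%:C * c.
Proof.
case: c => a b hx; rewrite cexpectE mulRC.
have e1 : Ef (fun w => cre ((x w)%:C * (a +i* b))) = Ef x * a.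
  by rewrite -EfZr//; apply: Ef_ext => w /=; ring.
have e2 : Ef (fun w => cim ((x w)%:C * (a +i* b))) = Ef x * b.
  by rewrite -EfZr//; apply: Ef_ext => w /=; ring.
by rewrite e1 e2.
Qed.
Variables (d : nat) (X : 'I_d -> T -> R).

Lemma mono0 m : mdeg m = 0%N -> forall w, monoRV X m w = 1.
Proof.
move=> /eqP; rewrite /mdeg sum_nat_eq0 => /forallP h w.
rewrite /monoRV big1 // => i _; rewrite (eqP (h i)) expr0 rmorph1 //.
Qed.

Lemma mono1 m : mdeg m = 1%N -> exists l, forall w, monoRV X m w = (X l w)%:C.
Proof.
move=> hm; case: (pickP (fun l => m l != 0%N)) => [l hl | h0]; last first.
  move: hm; rewrite /mdeg big1 // => i _; apply/eqP; move: (h0 i) => /= /negbFE //.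
exists l => w.
move: hm; rewrite /mdeg (bigD1 l) //= => hm.
have ml : m l = 1%N by move: hl hm; case: (m l) => [|[|k]] //=; rewrite addSn.
have rest : (\sum_(i < d | i != l) m i = 0)%N by move: hm; rewrite ml add1n => -[].
move/eqP: rest; rewrite sum_nat_eq0 => /forallP rest.
rewrite /monoRV (bigD1 l) //= ml expr1 big1 ?mulr1 // => i hi.
by move: (rest i); rewrite hi /= => /eqP ->; rewrite expr0 rmorph1.
Qed.

Lemma poly0 g : polyRV_lt X 0 g -> g = (fun _ => 0).
Proof.
case=> [[|a s] [hs ->]] //; by apply/funext => w; rewrite big_nil.
Qed.

Lemma poly1 h : polyRV_lt X 1 h -> exists c, h = (fun _ => c).
Proof.
case=> s [hs ->]; exists (\sum_(mc <- s) mc.2); apply/funext => w.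
rewrite big_seq [RHS]big_seq; apply: eq_bigr => mc hmc.
move/allP: hs => /(_ mc hmc); rewrite ltnS leqn0 => /eqP h0.
by rewrite mono0 // mulr1.
Qed.

Lemma poly2 h : polyRV_lt X 2 h ->
  exists c0 (c : 'I_d -> R[i]), h = (fun w => c0 + \sum_(l < d) c l * (X l w)%:C).
Proof.
case=> s [hs ->]; elim: s hs => [|[m a] s IH] /=.
  by move=> _; exists 0, (fun _ => 0); apply/funext => w; rewrite big_nil big1 ?addr0 // => l _; rewrite mul0r.
move=> /andP[hm /IH [c0 [c e]]].
have {}e : forall w, \sum_(mc <- s) mc.2 * monoRV X mc.1 w = c0 + \sum_(l < d) c l * (X l w)%:C.
  by move=> w; rewrite (congr1 (fun f => f w) e).
case hd: (mdeg m) hm => [|[|k]] // _.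
  exists (a + c0), c; apply/funext => w; rewrite big_cons e /= mono0 // mulr1 addrA //.
have [l hl] := mono1 hd.
exists c0, (fun l' => c l' + (if l' == l then a else 0)); apply/funext => w.
rewrite big_cons e /= hl.
under [in RHS]eq_bigr => i _ do rewrite mulrDl.
have hs : \sum_(i < d) (if i == l then a else 0) * (X i w)%:C = a * (X l w)%:C.
  by rewrite (bigD1 l) //= eqxx big1 ?addr0 // => i /negPf ->; rewrite mul0r.
rewrite big_split /= hs; ring.
Qed.

Lemma cexpect_rC' f x c : (forall w, f w = (x w)%:C * c) -> x \in L1 ->
  cexpect P f = (Ef x)%:C * c.
Proof. by move=> h hx; rewrite (cexpect_ext (g := fun w => (x w)%:C * c)) // cexpect_rC. Qed.
Lemma good_rC' f x c : (forall w, f w = (x w)%:C * c) -> x \in L1 -> good f.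
Proof. by move=> h hx; rewrite (_ : f = fun w => (x w)%:C * c); [exact: good_rC | apply/funext]. Qed.
Lemma good_lin f (x : 'I_d -> T -> R) c : (forall w, f w = \sum_(l < d) (x l w)%:C * c l) ->
  (forall l, x l \in L1) -> good f.
Proof.
move=> h hx; rewrite (_ : f = fun w => \sum_(l < d) (x l w)%:C * c l); last exact/funext.
by apply: good_sum => l; apply: good_rC.
Qed.
Lemma cexpect_lin f (x : 'I_d -> T -> R) c : (forall w, f w = \sum_(l < d) (x l w)%:C * c l) ->
  (forall l, x l \in L1) -> cexpect P f = \sum_(l < d) (Ef (x l))%:C * c l.
Proof.
move=> h hx; rewrite (cexpect_ext (g := fun w => \sum_(l < d) (x l w)%:C * c l)) //.
rewrite cexpect_sum; last by move=> l; apply: good_rC.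
by apply: eq_bigr => l _; rewrite cexpect_rC.
Qed.
Lemma cexpect_add f g1 g2 : (forall w, f w = g1 w + g2 w) -> good g1 -> good g2 ->
  cexpect P f = cexpect P g1 + cexpect P g2.
Proof. by move=> h h1 h2; rewrite (cexpect_ext (g := fun w => g1 w + g2 w)) // cexpectD. Qed.

Lemma poly_cst n c : polyRV_lt X n.+1 (fun _ => c).
Proof.
exists [:: ([ffun => 0%N], c)]; split.
  by rewrite /= andbT /mdeg big1 // => i _; rewrite ffunE.
apply/funext => w; rewrite big_cons big_nil addr0 /= mono0 ?mulr1 //.
by rewrite /mdeg big1 // => i _; rewrite ffunE.
Qed.

Definition delta (l : 'I_d) : {ffun 'I_d -> nat} := [ffun i => nat_of_bool (i == l)].
Lemma mdeg_delta l : mdeg (delta l) = 1%N.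
Proof.
rewrite /mdeg (bigD1 l) //= ffunE eqxx big1 // => i hi; by rewrite ffunE (negPf hi).
Qed.
Lemma mono_delta l w : monoRV X (delta l) w = (X l w)%:C.
Proof.
rewrite /monoRV (bigD1 l) //= ffunE eqxx expr1 big1 ?mulr1 // => i hi.
by rewrite ffunE (negPf hi) expr0 rmorph1.
Qed.
Lemma poly_lin (e : 'I_d -> R) : polyRV_lt X 2 (fun w => (\sum_(l < d) e l * X l w)%:C).
Proof.
exists [seq (delta l, (e l)%:C) | l <- enum 'I_d]; split.
  by apply/allP => mc /mapP [l _ ->] /=; rewrite mdeg_delta.
apply/funext => w; rewrite big_map big_enum /= rmorph_sum.
by apply: eq_bigr => l _ /=; rewrite mono_delta rmorphM.
Qed.

Lemma Gcomp_eq n g h0 : is_Gcomp P X n g h0 -> (forall h, is_Gcomp P X n g h -> h = h0) ->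
  Gcomp P X n g = h0.
Proof.
move=> H U; rewrite /Gcomp; case: pselect => [e|ne].
  exact: U (proj2_sig (cid e)).
by exfalso; apply: ne; exists h0.
Qed.

Hypothesis HX1 : forall k, X k \in L1.
Hypothesis HXX : forall k l, (fun w => X k w * X l w) \in L1.
Hypothesis HE1 : forall k, Ef (X k) = 0.
Hypothesis HE2 : forall k l, Ef (fun w => X k w * X l w) = (k == l)%:R.

Lemma inG0_cst c : inG P X 0 (fun _ => c).
Proof.
split; first exact: poly_cst.
move=> g /poly0 ->; rewrite /l2inner.
by rewrite (cexpect_ext (g := fun _ => 0)) ?cexpect0 // => w; rewrite conjc0 mulr0.
Qed.

Lemma G0 f r : (forall w, f w = (r w)%:C) -> r \in L1 ->
  Gcomp P X 0 f = fun _ => (Ef r)%:C.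
Proof.
move=> hf hr; apply: Gcomp_eq.
  split; first exact: inG0_cst.
  move=> k [/poly1 [c ->] _]; rewrite /l2inner.
  rewrite (@cexpect_rC' _ (fun w => r w + - Ef r) (c^*)).
  - by rewrite EfD ?Ef_cst ?subrr ?rmorph0 ?mul0r //; exact: L1_cst.
  - by move=> w; rewrite hf rmorphD rmorphN.
  - by apply: L1D => //; exact: L1_cst.
move=> h [[/poly1 [c ->] _] H]; apply/funext => w0.
have := H (fun _ => (1:R)%:C) (inG0_cst _); rewrite /l2inner.
rewrite (@cexpect_add _ (fun w => (r w)%:C * 1) (fun w => ((fun _ => 1:R) w)%:C * - c)).
- rewrite (@cexpect_rC' (fun w => (r w)%:C * 1) r 1) // (@cexpect_rC' _ (fun _ => 1:R) (- c)) //; last exact: L1_cst.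
  by rewrite Ef_cst rmorph1 mulr1 mul1r => /eqP; rewrite subr_eq0 => /eqP.
- by move=> w; rewrite hf conjc_real rmorph1 !mulr1 mul1r.
- exact: good_rC.
- by apply: good_rC; exact: L1_cst.
Qed.

Lemma G1_shape k : inG P X 1 k -> exists c : 'I_d -> R[i], k = fun w => \sum_(l < d) c l * (X l w)%:C.
Proof.
move=> [/poly2 [c0 [c ->]] H]; exists c.
have := H (fun _ => (1:R)%:C) (poly_cst 0 _); rewrite /l2inner.
rewrite (@cexpect_add _ (fun w => ((fun _ => 1:R) w)%:C * c0) (fun w => \sum_(l < d) (X l w)%:C * c l)).
- rewrite (@cexpect_rC' _ (fun _ => 1:R) c0) //; last exact: L1_cst.
  rewrite (@cexpect_lin _ X c) // Ef_cst rmorph1 mul1r big1 ?addr0; last first.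
    by move=> l _; rewrite HE1 rmorph0 mul0r.
  by move=> ->; apply/funext => w; rewrite add0r.
- move=> w; rewrite conjc_real rmorph1 mulr1 mul1r; congr (_ + _).
  by apply: eq_bigr => l _; rewrite mulrC.
- by apply: good_rC; exact: L1_cst.
- by apply: (@good_lin _ X c).
Qed.

Lemma inG1_lin e : inG P X 1 (fun w => (\sum_(l < d) e l * X l w)%:C).
Proof.
split; first exact: poly_lin.
move=> g /poly1 [c ->]; rewrite /l2inner.
have hL : (fun w => \sum_(l < d) e l * X l w) \in L1 by apply: L1_sum => l; apply: L1Z.
rewrite (@cexpect_rC' _ (fun w => \sum_(l < d) e l * X l w) (c^*)) //.
rewrite Ef_sum; last by move=> l; apply: L1Z.
by rewrite big1 ?rmorph0 ?mul0r // => l _; rewrite EfZ // HE1 mulr0.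
Qed.

Lemma inG1_X m : inG P X 1 (fun w => (X m w)%:C).
Proof.
have -> : (fun w => (X m w)%:C) = (fun w => (\sum_(l < d) (l == m)%:R * X l w)%:C).
  apply/funext => w; rewrite (bigD1 m) //= eqxx mul1r big1 ?addr0 // => l /negPf ->.
  by rewrite mul0r.
exact: inG1_lin.
Qed.

Lemma resid_eq r (e : 'I_d -> R) l w :
  (r w - \sum_(m < d) e m * X m w) * X l w =
  r w * X l w + \sum_(m < d) (- e m) * (X m w * X l w).
Proof.
rewrite mulrBl big_distrl /= -sumrN; congr (_ + _); apply: eq_bigr => m _; ring.
Qed.

Lemma Ef_resid r (e : 'I_d -> R) l : (fun w => r w * X l w) \in L1 ->
  Ef (fun w => (r w - \sum_(m < d) e m * X m w) * X l w) = Ef (fun w => r w * X l w) - e l.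
Proof.
move=> hr; rewrite (Ef_ext (resid_eq r e l)) EfD //; last first.
  by apply: L1_sum => m; apply: L1Z.
rewrite Ef_sum; last by move=> m; apply: L1Z.
congr (_ + _); rewrite (bigD1 l) //= EfZ // HE2 eqxx mulr1 big1 ?addr0 // => m /negPf hm.
by rewrite EfZ // HE2 hm mulr0.
Qed.

Lemma G1 f r : (forall w, f w = (r w)%:C) -> (forall l, (fun w => r w * X l w) \in L1) ->
  Gcomp P X 1 f = fun w => (\sum_(l < d) Ef (fun w => r w * X l w) * X l w)%:C.
Proof.
set e := fun l => Ef (fun w => r w * X l w).
move=> hf hr; apply: Gcomp_eq.
  split; first exact: inG1_lin.
  move=> k /G1_shape [c ->]; rewrite /l2inner.
  rewrite (@cexpect_lin _ (fun l w => (r w - \sum_(m < d) e m * X m w) * X l w) (fun l => (c l)^*)).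
  - by rewrite big1 // => l _; rewrite Ef_resid // subrr rmorph0 mul0r.
  - move=> w; rewrite hf -rmorphB rmorph_sum big_distrr; apply: eq_bigr => l _.
    rewrite /e /= rmorphM /= oppr0 complexr0 rmorphM; ring.
  - move=> l; apply: (L1_ext (fun w => esym (resid_eq r e l w))).
    by apply: L1D => //; apply: L1_sum => m; apply: L1Z.
move=> h [/G1_shape [t ->] H]; apply/funext => w.
suff ht : forall m, t m = (e m)%:C.
  by rewrite rmorph_sum; apply: eq_bigr => l _; rewrite ht rmorphM.
move=> m; have := H _ (inG1_X m); rewrite /l2inner.
rewrite (@cexpect_add _ (fun w => (r w * X m w)%:C * 1)
   (fun w => \sum_(l < d) (X l w * X m w)%:C * (- t l))).
- rewrite (@cexpect_rC' (fun w => (r w * X m w)%:C * 1) (fun w => r w * X m w) 1) //.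
  rewrite (@cexpect_lin _ (fun l w => X l w * X m w) (fun l => - t l)) //.
  rewrite (bigD1 m) //= HE2 eqxx big1 ?addr0 ?mulr1; last first.
    by move=> l /negPf hl; rewrite HE2 hl rmorph0 mul0r.
  by rewrite rmorph1 mul1r => /eqP; rewrite subr_eq0 => /eqP ->.
- move=> w'; rewrite hf conjc_real mulrBl big_distrl /= -sumrN mulr1 rmorphM.
  by congr (_ + _); apply: eq_bigr => l _; rewrite rmorphM; ring.
- exact: good_rC.
- by apply: (@good_lin _ (fun l w => X l w * X m w) (fun l => - t l)).
Qed.

Lemma Xs_eq c' (b : 'I_d -> R) m w :
  X m w * (c' + \sum_(l < d) b l * X l w) = c' * X m w + \sum_(l < d) b l * (X m w * X l w).
Proof. rewrite mulrDr big_distrr /=; congr (_ + _); first by rewrite mulrC. by apply: eq_bigr => l _; ring. Qed.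
Lemma L1_s c' (b : 'I_d -> R) : (fun w => c' + \sum_(l < d) b l * X l w) \in L1.
Proof. by apply: L1D; [exact: L1_cst | apply: L1_sum => l; apply: L1Z]. Qed.
Lemma L1_Xs c' (b : 'I_d -> R) m : (fun w => X m w * (c' + \sum_(l < d) b l * X l w)) \in L1.
Proof.
apply: (L1_ext (fun w => esym (Xs_eq c' b m w))).
by apply: L1D; [exact: L1Z | apply: L1_sum => l; apply: L1Z].
Qed.
Lemma Ef_Xs c' (b : 'I_d -> R) m : Ef (fun w => X m w * (c' + \sum_(l < d) b l * X l w)) = b m.
Proof.
rewrite (Ef_ext (Xs_eq c' b m)) EfD; [|exact: L1Z|by apply: L1_sum => l; apply: L1Z].
rewrite EfZ // HE1 mulr0 add0r Ef_sum; last by move=> l; apply: L1Z.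
rewrite (bigD1 m) //= EfZ // HE2 eqxx mulr1 big1 ?addr0 // => l /negPf hl.
by rewrite EfZ // HE2 eq_sym hl mulr0.
Qed.
Lemma L1_sq c' (b : 'I_d -> R) :
  (fun w => (c' + \sum_(l < d) b l * X l w) * (c' + \sum_(l < d) b l * X l w)) \in L1.
Proof.
set s := fun w => c' + \sum_(l < d) b l * X l w.
have e : forall w, c' * s w + \sum_(m < d) b m * (X m w * s w) = s w * s w.
  move=> w; rewrite {3}/s mulrDl big_distrl /=; congr (_ + _).
  by apply: eq_bigr => m _; ring.
apply: (L1_ext e); apply: L1D; first exact: L1Z (L1_s _ _).
by apply: L1_sum => m; apply: L1Z; exact: L1_Xs.
Qed.
Lemma sq_lin c' (b : 'I_d -> R) :
  Ef (fun w => (c' + \sum_(l < d) b l * X l w) * (c' + \sum_(l < d) b l * X l w)) =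
  c' ^+ 2 + \sum_(l < d) b l ^+ 2.
Proof.
set s := fun w => c' + \sum_(l < d) b l * X l w.
have e : forall w, s w * s w = c' * s w + \sum_(m < d) b m * (X m w * s w).
  move=> w; rewrite {1}/s mulrDl big_distrl /=; congr (_ + _).
  by apply: eq_bigr => m _; ring.
rewrite (Ef_ext e) EfD; [|exact: L1Z (L1_s _ _)|by apply: L1_sum => m; apply: L1Z; exact: L1_Xs].
rewrite EfZ; last exact: L1_s.
rewrite (Ef_ext (y := fun w => c' + \sum_(l < d) b l * X l w)) // EfD; [|exact: L1_cst|by apply: L1_sum => l; apply: L1Z].
rewrite Ef_cst Ef_sum; last by move=> l; apply: L1Z.
rewrite big1 ?addr0; last by move=> l _; rewrite EfZ // HE1 mulr0.
rewrite Ef_sum; last by move=> m; apply: L1Z; exact: L1_Xs.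
congr (_ + _).
by apply: eq_bigr => m _; rewrite EfZ; [rewrite Ef_Xs; ring | exact: L1_Xs].
Qed.
End S.
Lemma ab2 (R : realDomainType) (a b : R) : `|a * b| <= a ^+ 2 + b ^+ 2.
Proof.
rewrite normrM -(real_normK (num_real a)) -(real_normK (num_real b)).
have ha := normr_ge0 a; have hb := normr_ge0 b.
nra.
Qed.
Lemma abc (R : realDomainType) (a b c : R) : `|a * b * c| <= a ^+ 4 + b ^+ 4 + c ^+ 2.
Proof.
have h1 := @ab2 _ (a * b) c.
have h2 := @ab2 _ (a ^+ 2) (b ^+ 2).
rewrite ger0_norm in h2; last by apply: mulr_ge0; apply: sqr_ge0.
have e1 : (a * b) ^+ 2 = a ^+ 2 * b ^+ 2 by ring.
have e2 : (a ^+ 2) ^+ 2 = a ^+ 4 by ring.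
have e3 : (b ^+ 2) ^+ 2 = b ^+ 4 by ring.
rewrite e1 in h1; rewrite e2 e3 in h2.
lra.
Qed.

Section Integ.
Variables (R : realType) (dm : measure_display) (T : measurableType dm)
  (P : probability T R) (d : nat) (X : 'I_d -> T -> R).
Local Notation L1 := (Lfun P 1).
Hypothesis hm : forall i, measurable_fun setT (X i).
Hypothesis hp : forall i (n : nat), P.-integrable setT (fun w => ((X i w) ^+ n)%:E).

Lemma Lpow i n : (fun w => X i w ^+ n) \in L1.
Proof. exact/Lfun1_integrable/hp. Qed.

Lemma L1_dom (f g : T -> R) : measurable_fun setT f -> g \in L1 ->
  (forall w, `|f w| <= g w) -> f \in L1.
Proof.
move=> mf /Lfun1_integrable hg h; apply/Lfun1_integrable.
apply: (le_integrable measurableT _ _ hg).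
  exact/measurable_EFinP.
move=> w _ /=; rewrite lee_fin; apply: (le_trans (h w)); exact: ler_norm.
Qed.

Lemma HX1' k : X k \in L1.
Proof. by apply: (L1_ext _ (Lpow k 1)) => w; rewrite expr1. Qed.

Lemma HXX' k l : (fun w => X k w * X l w) \in L1.
Proof.
apply: (L1_dom (g := fun w => X k w ^+ 2 + X l w ^+ 2)).
- exact: measurable_funM.
- exact: L1D (Lpow _ _) (Lpow _ _).
- by move=> w; apply: ab2.
Qed.

Lemma HXXX a b c : (fun w => X a w * X b w * X c w) \in L1.
Proof.
apply: (L1_dom (g := fun w => X a w ^+ 4 + X b w ^+ 4 + X c w ^+ 2)).
- by apply: measurable_funM => //; exact: measurable_funM.
- by apply: L1D; [apply: L1D|]; exact: Lpow.
- by move=> w; apply: abc.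
Qed.
End Integ.




Lemma prod3 (R : realType) (G : 'I_3 -> R) :
  \prod_(p < 3) G p = G ord0 * G (inord 1) * G (inord 2).
Proof.
rewrite !big_ord_recl big_ord0 mulr1 mulrA; congr (_ * G _ * G _); apply: val_inj; by rewrite /= inordK.
Qed.

Unset Implicit Arguments. Set Strict Implicit.

Theorem mainTheorem2 (R : realType) (dm : measure_display) (T : measurableType dm)
  (P : probability T R) (d : nat) (X : 'I_d -> T -> R)
  (alpha : 'I_d -> 'I_d -> 'I_d -> R) (beta : 'I_d -> 'I_d -> R) :
  (forall i, measurable_fun setT (X i)) ->
  (forall i (n : nat), integrable P setT (fun w => ((X i w) ^+ n)%:E)) ->
  meixner_comm P X alpha beta ->
  meixner_nondegenerate P X ->
  (forall k, expectation P (X k) = 0%E) ->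
  (forall i j, expectation P (fun w => X i w * X j w) = ((i == j)%:R)%:E) ->
  forall i j k : 'I_d,
    [/\ alpha i j k = alpha j i k,
        alpha i j k = alpha i k j &
        forall s : 'S_3,
          alpha (trip i j k (s ord0)) (trip i j k (s (inord 1)))
                (trip i j k (s (inord 2))) = alpha i j k].
Proof.
move=> hm hp hcomm _ hE1 hE2.
have HX1 := HX1' hp.
have HXX := HXX' hm hp.
have HXXX := HXXX hm hp.
have HE1 : forall k, Ef P (X k) = 0 by move=> k; rewrite /Ef hE1.
have HE2 : forall k l, Ef P (fun w => X k w * X l w) = (k == l)%:R by move=> k l; rewrite /Ef hE2.
have key : forall a b m, alpha a b m = 2^-1 * Ef P (fun w => X a w * X b w * X m w).
  move=> a b m.
  pose g := fun _ : T => (1:R)%:C.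
  set t := fun m => Ef P (fun w => X a w * X b w * X m w).
  have Gg0 : Gcomp P X 0 g = fun _ => (1:R)%:C.
    by rewrite (@G0 _ _ _ P d X g (fun _ => 1)) // ?Ef_cst //; exact: L1_cst.
  have U0 : forall w, Uop P X a 0 g w = 0.
    move=> w; rewrite /Uop big_ord_recl big_ord0 /= addr0 add0r /azero_n Gg0.
    rewrite (@G0 _ _ _ P d X (mulX X a (fun _ => (1:R)%:C)) (fun w => X a w * 1)) //=.
    - by rewrite (Ef_ext P (y := X a)) ?HE1 ?rmorph0 ?mulr0 // => w'; rewrite mulr1.
    - by move=> w'; rewrite /mulX rmorphM.
    - by apply: (L1_ext _ (HX1 a)) => w'; rewrite mulr1.
  have GB1 : Gcomp P X 1 (mulX X b g) = fun w => (X b w)%:C.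
    rewrite (G1 HX1 HXX HE1 HE2 (f := mulX X b g) (r := fun w => X b w * 1)).
    - apply/funext => w; congr (_%:C); rewrite (bigD1 b) //= big1 ?addr0.
        by rewrite (Ef_ext P (y := fun w => X b w * X b w)) ?HE2 ?eqxx ?mul1r // => w'; rewrite mulr1.
      move=> l hl; rewrite (Ef_ext P (y := fun w => X b w * X l w)) ?HE2; last by move=> w'; rewrite mulr1.
      by rewrite eq_sym (negPf hl) mul0r.
    - by move=> w; rewrite /mulX /g rmorphM.
    - by move=> l; apply: (L1_ext _ (HXX b l)) => w; rewrite mulr1.
  have GB0 : Gcomp P X 0 (mulX X b g) = fun _ => 0.
    rewrite (@G0 _ _ _ P d X (mulX X b g) (fun w => X b w * 1)).
    - by rewrite (Ef_ext P (y := X b)) ?HE1 ?rmorph0 // => w'; rewrite mulr1.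
    - by move=> w'; rewrite /mulX rmorphM.
    - by apply: (L1_ext _ (HX1 b)) => w'; rewrite mulr1.
  have GA0 : Gcomp P X 0 (mulX X a (fun _ => 0)) = fun _ => 0.
    rewrite (@G0 _ _ _ P d X (mulX X a (fun _ => 0)) (fun _ => 0)).
    - by rewrite Ef_cst rmorph0.
    - by move=> w'; rewrite /mulX mulr0 rmorph0.
    - exact: L1_cst.
  have GAB0 : Gcomp P X 0 (mulX X a (fun w => (X b w)%:C)) = fun _ => ((a == b)%:R)%:C.
    rewrite (@G0 _ _ _ P d X (mulX X a (fun w => (X b w)%:C)) (fun w => X a w * X b w)).
    - by rewrite HE2.
    - by move=> w'; rewrite /mulX rmorphM.
    - exact: HXX.
  have GAB1 : Gcomp P X 1 (mulX X a (fun w => (X b w)%:C)) =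
      fun w => (\sum_(m < d) t m * X m w)%:C.
    have h1 : forall w, mulX X a (fun w => (X b w)%:C) w = (X a w * X b w)%:C.
      by move=> w'; rewrite /mulX rmorphM.
    by rewrite (G1 HX1 HXX HE1 HE2 h1 (HXXX a b)).

  have U1 : forall w, Uop P X a 1 (mulX X b g) w =
      ((a == b)%:R)%:C + 2^-1 * (\sum_(m < d) t m * X m w)%:C.
    move=> w; rewrite /Uop !big_ord_recl big_ord0 /= /bump /= addr0 /azero_n.
    rewrite GB0 GA0 GB1 GAB0 GAB1 /=.
    by rewrite mulr0 !add0r.
  have hc := hcomm a b 0 g (poly_cst X 0 _).
  set bb := fun m => 2^-1 * t m - alpha a b m.
  set c' := (a == b)%:R - beta a b.
  have hD : forall w, (Uop P X a 1 (mulX X b g) w - (X b w)%:C * Uop P X a 0 g w)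
      - (\sum_(k < d) (alpha a b k)%:C * (X k w)%:C * g w + (beta a b)%:C * g w)
      = (c' + \sum_(l < d) bb l * X l w)%:C.
    move=> w; rewrite U1 U0 mulr0 subr0 /g rmorph1 !mulr1.
    have hS2 : \sum_(k < d) (alpha a b k)%:C * (X k w)%:C * 1 = (\sum_(k < d) alpha a b k * X k w)%:C.
      by rewrite rmorph_sum; apply: eq_bigr => k _; rewrite rmorphM mulr1.
    have hr : c' + \sum_(l < d) bb l * X l w = (a == b)%:R - beta a b
        + 2^-1 * (\sum_(m < d) t m * X m w) - \sum_(k < d) alpha a b k * X k w.
      rewrite /bb (eq_bigr (fun m => 2^-1 * (t m * X m w) - alpha a b m * X m w)); last by move=> m' _; ring.
      by rewrite sumrB -big_distrr /= /c'; ring.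
    rewrite hS2 hr.
    have h2 : (2^-1 : R[i]) = (2^-1 : R)%:C by rewrite fmorphV rmorph_nat.
    by rewrite h2; set c2 := (2^-1 : R); ring.
  have hc2 : cexpect P (fun w => ((c' + \sum_(l < d) bb l * X l w) * (c' + \sum_(l < d) bb l * X l w))%:C * 1) = 0.
    move: hc; rewrite /eqL2 /l2inner => <-; apply: cexpect_ext => w /=.
    by rewrite hD conjc_real rmorphM mulr1.
  rewrite cexpect_rC in hc2; last exact: L1_sq.
  move: (congr1 (@cre R) hc2); rewrite /= mulr1 mul0r subr0 (sq_lin HX1 HXX HE1 HE2) => hs.
  have : \sum_(l < d) bb l ^+ 2 = 0.
    move/eqP: hs; rewrite paddr_eq0 ?sqr_ge0 //; last by apply: sumr_ge0 => l _; exact: sqr_ge0.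
    by case/andP => _ /eqP.
  move/eqP; rewrite psumr_eq0; last by move=> l _; exact: sqr_ge0.
  move/allP => /(_ m (mem_index_enum _)) /=; rewrite sqrf_eq0 /bb subr_eq0 => /eqP <-.
  by [].
move=> i j k; rewrite !key; split.
- by f_equal; apply: (Ef_ext P) => w; ring.
- by f_equal; apply: (Ef_ext P) => w; ring.
move=> s; rewrite key; f_equal; apply: (Ef_ext P) => w.
have t0 : trip i j k ord0 = i by [].
have t1 : trip i j k (inord 1) = j by rewrite /trip (tnth_nth i) /= inordK.
have t2 : trip i j k (inord 2) = k by rewrite /trip (tnth_nth i) /= inordK.
have hpr : \prod_(p < 3) X (trip i j k (s p)) w = \prod_(p < 3) X (trip i j k p) w.
  by rewrite [RHS](reindex_inj (@perm_inj _ s)).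
by rewrite !prod3 t0 t1 t2 in hpr.

Qed.
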